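(* For any commutative Noetherian ring $R$ with unity, $\Gamma_E(R)$ is not a cycle graph.
   Context: For $x,y\in R$ write $x\sim y$ iff $\operatorname{ann}(x)=\operatorname{ann}(y)$; $[x]$ denotes the equivalence class of $x$. Let $Z^*(R)$ be the set of nonzero zero divisors of $R$. The graph $\Gamma_E(R)$ is the simple graph whose vertices are the classes $[x]$ with $x\in Z^*(R)$, two distinct vertices $[x],[y]$ being adjacent iff $xy=0$. A cycle graph is an $n$-gon, $n\ge 3$: a graph on vertices $v_1,\dots,v_n$ whose only edges are $v_iv_{i+1}$ ($1\le i<n$) and $v_nv_1$. *)

(* Defs.v *)
From HB Require Import structures.
From mathcomp Require Import all_boot all_order all_algebra.
Set Implicit Arguments. Unset Strict Implicit. Unset Printing Implicit Defensive.
Import GRing.Theory.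
Local Open Scope ring_scope.

Definition is_ideal (R : comPzRingType) (I : R -> Prop) : Prop :=
  I 0 /\ (forall x y, I x -> I y -> I (x - y)) /\ (forall r x, I x -> I (r * x)).

Definition noetherian (R : comPzRingType) : Prop :=
  forall I : nat -> (R -> Prop),
    (forall n, is_ideal (I n)) ->
    (forall n x, I n x -> I n.+1 x) ->
    exists N, forall n, (N <= n)%N -> forall x, I n x -> I N x.

Definition ann (R : comPzRingType) (x : R) : R -> Prop := fun y => x * y = 0.

Definition eclass (R : comPzRingType) (x : R) : R -> Prop := fun y => ann y = ann x.

Definition zdiv_star (R : comPzRingType) (x : R) : Prop :=
  x != 0 /\ exists y : R, y != 0 /\ x * y = 0.

Definition GammaE_vertex (R : comPzRingType) (C : R -> Prop) : Prop :=
  exists x, zdiv_star x /\ C = eclass x.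

Definition GammaE_adj (R : comPzRingType) (C D : R -> Prop) : Prop :=
  C <> D /\ exists x y : R, C = eclass x /\ D = eclass y /\ x * y = 0.

Definition cycle_adj (n : nat) (i j : 'I_n) : Prop :=
  (val j = (val i).+1 %% n)%N \/ (val i = (val j).+1 %% n)%N.

Definition is_cycle_graph (T : Type) (V : T -> Prop) (E : T -> T -> Prop) : Prop :=
  exists n : nat, (3 <= n)%N /\
  exists f : 'I_n -> T,
    injective f /\ (forall i, V (f i)) /\ (forall v, V v -> exists i, f i = v) /\
    (forall i j, E (f i) (f j) <-> cycle_adj i j).

(* Main.v *)
Require Import Defs.
From HB Require Import structures.
From mathcomp Require Import all_boot all_order all_algebra.
From mathcomp Require Import ring zify.
From Stdlib Require Import Classical ClassicalEpsilon FunctionalExtensionality PropExtensionality.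
Set Implicit Arguments. Unset Strict Implicit. Unset Printing Implicit Defensive.
Import GRing.Theory.
Local Open Scope ring_scope.

Section Elem.
Variable R : comPzRingType.

Lemma annP (u v : R) : ann u = ann v -> forall y, u * y = 0 <-> v * y = 0.
Proof. move=> H y. have E := f_equal (fun F => F y) H. simpl in E. by rewrite /ann in E; rewrite E; split. Qed.

Lemma annI (u v : R) : (forall y, u * y = 0 <-> v * y = 0) -> ann u = ann v.
Proof.
move=> H; apply: functional_extensionality => y; apply: propositional_extensionality; exact: H.
Qed.

Definition Maxe (u : R) := forall z : R, z != 0 -> (forall y, u * y = 0 -> z * y = 0) -> ann z = ann u.

Lemma nonnbr (u v : R) : Maxe u -> u * v != 0 -> forall s, v * s = 0 -> u * s = 0.
Proof.
move=> Mu uv s vs.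
have E : ann (u * v) = ann u.
  apply: Mu => // y uy.
  by rewrite -mulrA (mulrC v) mulrA uy mul0r.
by apply/(annP E s); rewrite -mulrA vs mulr0.
Qed.

Lemma neg_ann (x a : R) : x + a = 0 -> ann a = ann x.
Proof.
move=> h; have -> : a = - x by rewrite -[a]add0r -(subrr x) -addrA (addrC (-x)) addrA h add0r.
apply: annI => y; rewrite mulNr; split => e; last by rewrite e oppr0.
by rewrite -[x * y]opprK e oppr0.
Qed.

Lemma c4_step (x a b w : R) :
  Maxe x -> a != 0 -> w != 0 ->
  (forall z, zdiv_star z -> ann z = ann x \/ ann z = ann a \/ ann z = ann b \/ ann z = ann w) ->
  x * a = 0 -> x * b = 0 -> a * w = 0 -> b * w = 0 -> a * b != 0 -> x * w != 0 ->
  ann w <> ann x -> x * x = 0.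
Proof.
move=> Mx a0 w0 cov xa xb aw bw ab xw wx.
have [//|xx] := eqVneq (x * x) 0.
exfalso; apply: wx; apply: Mx => // p xp.
have [//|pw] := eqVneq (w * p) 0.
exfalso.
have zd : zdiv_star (w * p).
  split => //; exists a; split => //.
  have -> : w * p * a = p * (a * w) by ring.
  by rewrite aw mulr0.
have e1 : w * p * x = 0.
  have -> : w * p * x = w * (x * p) by ring.
  by rewrite xp mulr0.
have e2 : w * p * b = 0.
  have -> : w * p * b = p * (b * w) by ring.
  by rewrite bw mulr0.
have e3 : w * p * a = 0.
  have -> : w * p * a = p * (a * w) by ring.
  by rewrite aw mulr0.
case: (cov _ zd) => [E|[E|[E|E]]].
- by move: xx; rewrite ((annP E x).1 e1) eqxx.
- by move: ab; rewrite ((annP E b).1 e2) eqxx.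
- by move: ab; rewrite mulrC ((annP E a).1 e3) eqxx.
- by move: xw; rewrite mulrC ((annP E x).1 e1) eqxx.
Qed.

Lemma c4 (x a b w : R) :
  Maxe x -> Maxe a -> x != 0 -> a != 0 -> b != 0 -> w != 0 ->
  (forall z, zdiv_star z -> ann z = ann x \/ ann z = ann a \/ ann z = ann b \/ ann z = ann w) ->
  x * a = 0 -> x * b = 0 -> a * w = 0 -> b * w = 0 -> a * b != 0 -> x * w != 0 ->
  ann w <> ann x -> ann b <> ann a -> ann a <> ann x -> False.
Proof.
move=> Mx Ma x0 a0 b0 w0 cov xa xb aw bw ab xw wx ba ax.
have xx := c4_step Mx a0 w0 cov xa xb aw bw ab xw wx.
have aa : a * a = 0.
  apply: (c4_step (x:=a) (a:=x) (b:=w) (w:=b)) => //.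
  all: try by rewrite mulrC.
  - by move=> z /cov; tauto.
have s0 : x + a != 0 by apply/eqP => /neg_ann.
have zd : zdiv_star (x + a).
  split => //; exists x; split => //; by rewrite mulrDl xx mulrC xa addr0.
have sx : (x + a) * x = 0 by rewrite mulrDl xx mulrC xa addr0.
have sa : (x + a) * a = 0 by rewrite mulrDl xa aa addr0.
case: (cov _ zd) => [E|[E|[E|E]]].
- apply: ax; apply: Mx => // y xy.
  have : (x + a) * y = 0 by apply/(annP E y).
  by rewrite mulrDl xy add0r.
- apply: ax; apply/esym; apply: Ma => // y ay.
  have : (x + a) * y = 0 by apply/(annP E y).
  by rewrite mulrDl ay addr0.
- by move: ab; rewrite mulrC -((annP E a).1 sa) eqxx.
- by move: xw; rewrite mulrC -((annP E x).1 sx) eqxx.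
Qed.

Lemma tri_sq (x a b : R) : Maxe x -> x != 0 -> a != 0 ->
  (forall z, zdiv_star z -> ann z = ann x \/ ann z = ann a \/ ann z = ann b) ->
  x * a = 0 -> x * b = 0 -> a * b = 0 -> ann a <> ann x -> a * a != 0.
Proof.
move=> Mx x0 a0 cov xa xb ab ax; apply/eqP => aa.
apply: ax; apply: Mx => // p xp.
have [->|p0] := eqVneq p 0; first by rewrite mulr0.
have zd : zdiv_star p by split => //; exists x; split => //; rewrite mulrC.
rewrite mulrC; case: (cov _ zd) => [E|[E|E]]; apply/(annP E a) => //.
by rewrite mulrC.
Qed.

Lemma tri (x a b : R) : Maxe x -> x != 0 -> a != 0 -> b != 0 ->
  (forall z, zdiv_star z -> ann z = ann x \/ ann z = ann a \/ ann z = ann b) ->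
  x * a = 0 -> x * b = 0 -> a * b = 0 ->
  ann a <> ann x -> ann b <> ann x -> ann b <> ann a -> False.
Proof.
move=> Mx x0 a0 b0 cov xa xb ab ax bx ba.
have aa := tri_sq Mx x0 a0 cov xa xb ab ax.
have bb : b * b != 0.
  apply: (tri_sq (x:=x) (a:=b) (b:=a) Mx x0 b0 _ xb xa _ bx).
    by move=> z /cov; tauto.
  by rewrite mulrC.
have s0 : a + b != 0 by apply/eqP => /neg_ann.
have zd : zdiv_star (a + b).
  split => //; exists x; split => //; by rewrite mulrC mulrDr xa xb addr0.
case: (cov _ zd) => [E|[E|E]].
- have : (a + b) * a = 0 by apply/(annP E a).
  by rewrite mulrDl (mulrC b) ab addr0 => /eqP; rewrite (negbTE aa).
- have : (a + b) * b = 0 by apply/(annP E b).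
  by rewrite mulrDl ab add0r => /eqP; rewrite (negbTE bb).
- have : (a + b) * a = 0 by apply/(annP E a); rewrite mulrC.
  by rewrite mulrDl (mulrC b) ab addr0 => /eqP; rewrite (negbTE aa).
Qed.
End Elem.

Lemma eqnatP (a b : nat) : reflect (@eq nat a b) (a == b).
Proof. exact: eqP. Qed.

Lemma cycD (n : nat) (n3 : (3 <= n)%N) (i : 'I_n) :
  exists j k : 'I_n, j != k /\ cycle_adj i j /\ cycle_adj i k /\
    forall l, cycle_adj i l -> l = j \/ l = k.
Proof.
have n0 : (0 < n)%N by apply: leq_trans n3.
have modS : forall l : 'I_n, (l.+1 %% n = if l.+1 == n then 0 else l.+1)%N.
  move=> l; have := ltn_ord l; rewrite leq_eqVlt => /orP [/eqP e | lt].
    by rewrite e modnn eqxx.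
  by rewrite modn_small // (ltn_eqF lt).
have kb : ((if nat_of_ord i == 0%N then n.-1 else (nat_of_ord i).-1) < n)%N.
  have := ltn_ord i; case: (eqnatP (nat_of_ord i) (0%N)) => H; lia.
exists (Ordinal (ltn_pmod (nat_of_ord i).+1 n0)), (Ordinal kb).
have iltn := ltn_ord i.
split; last split; last split.
- apply/eqP => /(congr1 val) /=; rewrite (modS i).
  case: (eqnatP ((nat_of_ord i).+1) (n)) => H1; case: (eqnatP (nat_of_ord i) (0%N)) => H2 /=; lia.
- by left.
- right => /=; case: (eqnatP (nat_of_ord i) 0%N) => H2 /=.
    by rewrite prednK // modnn.
  rewrite prednK; last lia.
  by rewrite modn_small.
- move=> l; have lltn := ltn_ord l; case => H.
    by left; apply: val_inj.
  right; apply: val_inj => /=; move: H; rewrite modS.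
  case: (eqnatP ((nat_of_ord l).+1) (n)) => H1; case: (eqnatP (nat_of_ord i) (0%N)) => H2 /=; lia.
Qed.

Lemma fin_max (T : finType) (le : T -> T -> Prop) :
  (forall i, le i i) -> (forall i j k, le i j -> le j k -> le i k) ->
  forall i, exists k, le i k /\ forall j, le k j -> le j k.
Proof.
move=> refl trans i.
pose leb u v : bool := if excluded_middle_informative (le u v) then true else false.
have lebP : forall u v, leb u v <-> le u v.
  by move=> u v; rewrite /leb; case: excluded_middle_informative.
pose down v := [set u | leb u v].
have ii : leb i i by apply/lebP.
case: (arg_maxnP (fun v => #|down v|) ii) => k /lebP ik kmax.
exists k; split => // j kj.
have ij : leb i j by apply/lebP; exact: trans ik kj.
have := kmax j ij => cardle.
have sub : down k \subset down j.
  apply/subsetP => u; rewrite !inE => /lebP uk; apply/lebP; exact: trans uk kj.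
have : down k == down j by rewrite eqEcard sub.
move=> /eqP E; have : j \in down j by rewrite inE; apply/lebP.
by rewrite -E inE => /lebP.
Qed.

Theorem proposition1p8 (R : comPzRingType) :
  noetherian R -> ~ is_cycle_graph (@GammaE_vertex R) (@GammaE_adj R).
Proof.
move=> _ [n [n3 [f [finj [fV [fsurj fadj]]]]]].
have [x xP] : exists x : 'I_n -> R, forall i, zdiv_star (x i) /\ f i = eclass (x i).
  exact: (@fin_all_exists _ (fun _ => R) (fun i y => zdiv_star y /\ f i = eclass y) fV).
have eclE : forall u v : R, eclass u = eclass v -> ann u = ann v.
  by move=> u v H; have : eclass v u by rewrite -H.
have cover : forall z, zdiv_star z -> exists i, ann z = ann (x i).
  move=> z zd; have [i fi] := fsurj (eclass z) (ex_intro _ z (conj zd erefl)).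
  by exists i; apply: eclE; rewrite -fi (xP i).2.
have dist : forall i j, i != j -> ann (x i) <> ann (x j).
  move=> i j ij E; move/eqP: ij; apply; apply: finj.
  by rewrite (xP i).2 (xP j).2 /eclass E.
have nz : forall i, x i != 0 by move=> i; case: (xP i) => [[]].
pose A i j := i != j /\ x i * x j = 0.
have adjE : forall i j, cycle_adj i j <-> A i j.
  move=> i j; rewrite -fadj; split.
  - case=> fij [u [v [fu [fv uv]]]]; split.
      by apply/eqP => e; apply: fij; rewrite e.
    have Eu : ann u = ann (x i) by apply: eclE; rewrite -fu (xP i).2.
    have Ev : ann v = ann (x j) by apply: eclE; rewrite -fv (xP j).2.
    have h1 : x i * v = 0 by apply/(annP Eu).
    have h2 : v * x i = 0 by rewrite mulrC.
    by rewrite mulrC; apply/(annP Ev (x i)).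
  - case=> ij xij; split.
      by move=> e; move/eqP: ij; apply; apply: finj.
    by exists (x i), (x j); rewrite (xP i).2 (xP j).2.
have Asym : forall i j, A i j -> A j i.
  by move=> i j [ij e]; split; [rewrite eq_sym | rewrite mulrC].
have D : forall i, exists j k, j != k /\ A i j /\ A i k /\ forall l, A i l -> l = j \/ l = k.
  move=> i; have [j [k [jk [aj [ak al]]]]] := cycD n3 i.
  exists j, k; split => //; split; first by apply/adjE.
  split; first by apply/adjE.
  by move=> l /adjE; apply: al.
pose le i j := forall y, x i * y = 0 -> x j * y = 0.
have FM := @fin_max _ le (fun i y h => h) (fun i j k hij hjk y h => hjk y (hij y h)).
have MaxI : forall k, (forall j, le k j -> le j k) -> Maxe (x k).
  move=> k km z z0 kz.
  have [y [y0 xy]] := (xP k).1.2.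
  have zd : zdiv_star z by split => //; exists y; split => //; exact: kz.
  have [j Ej] := cover z zd.
  have kj : le k j by move=> t /kz /(annP Ej).
  have jk := km j kj.
  rewrite Ej; apply: annI => t; split; [exact: jk | exact: kj].
have n0 : (0 < n)%N by apply: leq_trans n3.
have [m [_ mmax]] := FM (Ordinal n0).
have Mm := MaxI m mmax.
have [a [b [ab [Ama [Amb Nm]]]]] := D m.
have am : a != m by case: (Asym _ _ Ama).
have bm : b != m by case: (Asym _ _ Amb).
case: (classic (exists w, w != m /\ w != a /\ w != b)) => [[w [wm [wa wb]]]|nw].
-
  have nAmw : x m * x w != 0.
    apply/eqP => e; have : A m w by split => //; rewrite eq_sym.
    by case/(Nm _) => e'; [move/eqP: wa | move/eqP: wb]; apply.
  have subw := nonnbr Mm nAmw.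
  have far : forall u, u != m -> u != a -> u != b -> A u a /\ A u b.
    move=> u um ua ub.
    have nAmu : x m * x u != 0.
      apply/eqP => e; have : A m u by split => //; rewrite eq_sym.
      by case/(Nm _) => e'; [move/eqP: ua | move/eqP: ub]; apply.
    have subu := nonnbr Mm nAmu.
    have Nu : forall l, A u l -> l = a \/ l = b.
      move=> l [ul e]; apply: (Nm l); split.
        apply/eqP => lm; move: e; rewrite -lm => e.
        have : A m u by split; [rewrite eq_sym | rewrite mulrC].
        by case/(Nm _) => e'; [move/eqP: ua | move/eqP: ub]; apply.
      exact: subu _ e.
    have [j [k [jk [Aj [Ak _]]]]] := D u.
    case: (Nu _ Aj) => ej; case: (Nu _ Ak) => ek; subst j k.
    + by move/eqP: jk.
    + by [].
    + by split.
    + by move/eqP: jk.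
  have [Awa Awb] := far w wm wa wb.
  have mw : m != w by rewrite eq_sym.
  have N2 : forall c, A c m -> A c w -> forall l, A c l -> l = m \/ l = w.
    move=> c Acm Acw l Acl.
    have [j [k [jk [Aj [Ak Nc]]]]] := D c.
    case: (Nc _ Acm) => em; case: (Nc _ Acw) => ew; case: (Nc _ Acl) => el.
    all: try first [ by move: mw; rewrite em ew eqxx
               | by left; rewrite el em | by right; rewrite el ew ].
  have Na := N2 a (Asym _ _ Ama) (Asym _ _ Awa).
  have Nb := N2 b (Asym _ _ Amb) (Asym _ _ Awb).
  have nAab : x a * x b != 0.
    apply/eqP => e; have : A a b by split.
    by case/(Na _) => e'; [move/eqP: bm | move/eqP: wb; rewrite e']; apply.
  have allv : forall u, u = m \/ u = a \/ u = b \/ u = w.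
    move=> u.
    case: (eqVneq u m) => [->|um]; first by left.
    case: (eqVneq u a) => [->|ua]; first by right; left.
    case: (eqVneq u b) => [->|ub]; first by right; right; left.
    have [Aua _] := far u um ua ub.
    by case: (Na _ (Asym _ _ Aua)) => e; [move/eqP: um | right; right; right].
  have cov4 : forall z, zdiv_star z -> ann z = ann (x m) \/ ann z = ann (x a) \/
      ann z = ann (x b) \/ ann z = ann (x w).
    move=> z /cover [i Ei]; rewrite Ei.
    by case: (allv i) => [->|[->|[->|->]]]; tauto.
  have MaxAB : Maxe (x a) \/ Maxe (x b).
    have [k [ak kmax]] := FM a.
    case: (allv k) => [ek|[ek|[ek|ek]]]; subst k.
    + by exfalso; move/eqP: nAmw; apply; apply: ak; rewrite mulrC; exact: Awa.2.
    + by left; apply: MaxI.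
    + by right; apply: MaxI.
    + by exfalso; move/eqP: nAmw; apply; rewrite mulrC; apply: ak; rewrite mulrC; exact: Ama.2.
  have xwa : x a * x w = 0 by case: (Asym _ _ Awa).
  have xwb : x b * x w = 0 by case: (Asym _ _ Awb).
  have dwm := dist w m wm.
  have dam := dist a m am.
  have dbm := dist b m bm.
  have ba : b != a by rewrite eq_sym.
  have dba := dist b a ba.
  case: MaxAB => MA.
  + apply: (c4 (x:=x m) (a:=x a) (b:=x b) (w:=x w)) => //.
    - by case: Ama.
    - by case: Amb.
  + apply: (c4 (x:=x m) (a:=x b) (b:=x a) (w:=x w)) => //.
    - by move=> z /cov4; tauto.
    - by case: Amb.
    - by case: Ama.
    - by rewrite mulrC.
    - by move=> e; apply: dba.
-
  have allv : forall u, u = m \/ u = a \/ u = b.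
    move=> u.
    case: (eqVneq u m) => [->|um]; first by left.
    case: (eqVneq u a) => [->|ua]; first by right; left.
    case: (eqVneq u b) => [->|ub]; first by right; right.
    by exfalso; apply: nw; exists u.
  have Aab : A a b.
    have [j [k [jk [Aj [Ak _]]]]] := D a.
    have ja : j != a by case: (Asym _ _ Aj).
    have ka : k != a by case: (Asym _ _ Ak).
    case: (allv j) => [ej|[ej|ej]]; subst j => //; last by rewrite eqxx in ja.
    case: (allv k) => [ek|[ek|ek]]; subst k => //; last by rewrite eqxx in ka.
    by rewrite eqxx in jk.
  have cov3 : forall z, zdiv_star z -> ann z = ann (x m) \/ ann z = ann (x a) \/ ann z = ann (x b).
    move=> z /cover [i Ei]; rewrite Ei.
    by case: (allv i) => [->|[->|->]]; tauto.
  have ba : b != a by rewrite eq_sym.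
  apply: (tri (x:=x m) (a:=x a) (b:=x b)) => //.
  - by case: Ama.
  - by case: Amb.
  - by case: Aab.
  - exact: dist.
  - exact: dist.
  - exact: dist.
Qed.
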